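(* Let $g_1,\dots,g_k$ be fully supported elements of $\mathrm{Diff}^2_+(S^1)$, each of which has a fixed point, and let $G$ be the group they generate. If the commutativity graph of $\{g_1,\dots,g_k\}$ is connected, then $G$ is abelian.
   Context: $\mathrm{Diff}^2_+(S^1)$ is the group of orientation-preserving $C^2$ diffeomorphisms of $S^1$. A homeomorphism $f$ is fully supported if the interior of its fixed point set is empty. The commutativity graph of a set $S$ of group elements has one vertex for each $s\in S$ and an edge joining two elements exactly when they commute. *)

(* Defs.v *)
From Stdlib Require Import Reals Relations.
From Coquelicot Require Import Coquelicot.
Open Scope R_scope.

(* The circle S^1 = R/Z, represented by the fundamental domain [0,1). *)
Definition S1 : Type := { x : R | 0 <= x < 1 }.

Lemma frac_part_in01 (x : R) : 0 <= frac_part x < 1.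
Proof. destruct (base_fp x) as [H1 H2]. split; [apply Rge_le; exact H1 | exact H2]. Qed.

Definition proj (x : R) : S1 := exist _ (frac_part x) (frac_part_in01 x).

Definition is_lift (f : S1 -> S1) (F : R -> R) : Prop :=
  forall x, proj (F x) = f (proj x).

(* f is an orientation-preserving C^2 diffeomorphism of S^1: it has a lift F
   commuting with integer translation, which is C^2 with F' > 0 everywhere
   (hence a C^2 diffeomorphism of R, by the inverse function theorem). *)
Definition Diff2plus (f : S1 -> S1) : Prop :=
  exists F : R -> R,
    is_lift f F /\
    (forall x, F (x + 1) = F x + 1) /\
    (forall x, ex_derive F x) /\
    (forall x, ex_derive_n F 2 x) /\
    (forall x, continuous (Derive_n F 2) x) /\
    (forall x, 0 < Derive F x).

Definition has_fixed_point (f : S1 -> S1) : Prop := exists p, f p = p.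

(* Fix(f) has empty interior in S^1: no nonempty open arc (image of an open
   interval of R under the covering map) is pointwise fixed. *)
Definition fully_supported (f : S1 -> S1) : Prop :=
  ~ exists a b : R, a < b /\ forall x, a < x < b -> f (proj x) = proj x.

Definition commute_maps (f g : S1 -> S1) : Prop := forall p, f (g p) = g (f p).

Definition comm_edge (k : nat) (g : nat -> S1 -> S1) (i j : nat) : Prop :=
  (i < k)%nat /\ (j < k)%nat /\ commute_maps (g i) (g j).

Definition comm_graph_connected (k : nat) (g : nat -> S1 -> S1) : Prop :=
  forall i j, (i < k)%nat -> (j < k)%nat -> clos_refl_trans nat (comm_edge k g) i j.

Inductive in_gen_group (k : nat) (g : nat -> S1 -> S1) : (S1 -> S1) -> Prop :=
  | gen_id : in_gen_group k g (fun p => p)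
  | gen_base : forall i, (i < k)%nat -> in_gen_group k g (g i)
  | gen_comp : forall h1 h2, in_gen_group k g h1 -> in_gen_group k g h2 ->
               in_gen_group k g (fun p => h1 (h2 p))
  | gen_inv : forall h h', in_gen_group k g h ->
              (forall p, h' (h p) = p) -> (forall p, h (h' p) = p) ->
              in_gen_group k g h'.

Definition gen_group_abelian (k : nat) (g : nat -> S1 -> S1) : Prop :=
  forall h1 h2, in_gen_group k g h1 -> in_gen_group k g h2 -> commute_maps h1 h2.

(* Main.v *)
Require Import Defs.
From Stdlib Require Import Reals Relations.
From Coquelicot Require Import Coquelicot.
From Stdlib Require Import Lra Lia ZArith Ranalysis5.
From Stdlib Require Import ClassicalEpsilon FunctionalExtensionality ProofIrrelevance Classical.
Open Scope R_scope.

Fixpoint itr (f : R -> R) (n : nat) (x : R) : R :=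
  match n with O => x | S n => f (itr f n x) end.

Lemma itr_S' f n x : itr f (S n) x = itr f n (f x).
Proof. induction n; simpl; auto. simpl in IHn. rewrite IHn. reflexivity. Qed.

Lemma itr_add f m n x : itr f (m + n) x = itr f m (itr f n x).
Proof. induction m; simpl; auto. rewrite IHm; auto. Qed.

Lemma itr_fix f n a : f a = a -> itr f n a = a.
Proof. intro H; induction n; simpl; auto. rewrite IHn; auto. Qed.

Lemma itr_comm1 u G n x : (forall y, u (G y) = G (u y)) -> u (itr G n x) = itr G n (u x).
Proof. intro H; induction n; simpl; auto. rewrite H, IHn; auto. Qed.

Lemma itr_comm u G m n x : (forall y, u (G y) = G (u y)) ->
  itr u m (itr G n x) = itr G n (itr u m x).
Proof. intro H; induction m; simpl; auto. rewrite IHm. apply itr_comm1; auto. Qed.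

Lemma itr_smono f n x y : (forall a b, a < b -> f a < f b) -> x < y -> itr f n x < itr f n y.
Proof. intros H Hxy; induction n; simpl; auto. Qed.

Lemma itr_mono f n x y : (forall a b, a <= b -> f a <= f b) -> x <= y -> itr f n x <= itr f n y.
Proof. intros H Hxy; induction n; simpl; auto. Qed.

Lemma smono_mono f : (forall a b, a < b -> f a < f b) -> forall a b, a <= b -> f a <= f b.
Proof. intros H a b Hab. destruct (Req_dec a b). subst; lra. left; apply H; lra. Qed.

Lemma smono_inj f : (forall a b, a < b -> f a < f b) -> forall a b, f a = f b -> a = b.
Proof. intros H a b E. destruct (Rtotal_order a b) as [h|[h|h]]; auto;
  apply H in h; lra. Qed.

Lemma cont_eps f x : continuity_pt f x -> forall eps, 0 < eps ->
  exists d, 0 < d /\ forall y, Rabs (y - x) < d -> Rabs (f y - f x) < eps.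
Proof.
  intros H eps He. destruct (H eps He) as [d [Hd H']]. exists d. split; auto.
  intros y Hy. destruct (Req_dec y x). subst. rewrite Rminus_diag, Rabs_R0; auto.
  apply (H' y). split. split; auto. exact I. simpl. unfold R_dist. auto.
Qed.

Lemma eps_cont f x : (forall eps, 0 < eps ->
  exists d, 0 < d /\ forall y, Rabs (y - x) < d -> Rabs (f y - f x) < eps) -> continuity_pt f x.
Proof.
  intros H eps He. destruct (H eps He) as [d [Hd H']]. exists d. split; auto.
  intros y [_ Hy]. apply H'. exact Hy.
Qed.

Lemma itr_cont f n x : (forall y, continuity_pt f y) -> continuity_pt (itr f n) x.
Proof.
  intro H. revert x; induction n; intro x.
  - apply eps_cont. intros eps He. exists eps. split; auto.
  - change (continuity_pt (comp f (itr f n)) x). apply continuity_pt_comp; auto.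
Qed.

Lemma itr_cont_all f n : (forall y, continuity_pt f y) -> continuity (itr f n).
Proof. intros H x; apply itr_cont; auto. Qed.

Fixpoint ditr (f df : R -> R) (n : nat) (x : R) : R :=
  match n with O => 1 | S n => df (itr f n x) * ditr f df n x end.

Lemma ditr_ok f df n x : (forall y, derivable_pt_lim f y (df y)) ->
  derivable_pt_lim (itr f n) x (ditr f df n x).
Proof.
  intro H. induction n; simpl.
  - change (derivable_pt_lim id x 1). apply derivable_pt_lim_id.
  - change (derivable_pt_lim (comp f (itr f n)) x (df (itr f n x) * ditr f df n x)).
    apply derivable_pt_lim_comp; auto.
Qed.

Lemma dcont f x l : derivable_pt_lim f x l -> continuity_pt f x.
Proof. intro H. apply (derivable_continuous_pt f x (exist _ l H)). Qed.

Lemma orbit_inc (f : R -> R) (x B : R) :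
  (forall y, continuity_pt f y) -> (forall y z, y <= z -> f y <= f z) ->
  x <= f x -> (forall n, itr f n x <= B) ->
  exists L, f L = L /\ L <= B /\ (forall n, itr f n x <= L) /\
    (forall eps, 0 < eps -> exists n, L - eps < itr f n x).
Proof.
  intros Hc Hm Hx HB.
  set (E := fun y => exists n, y = itr f n x).
  assert (Hb : bound E) by (exists B; intros y [n ->]; apply HB).
  assert (Hne : exists y, E y) by (exists x; exists O; reflexivity).
  destruct (completeness E Hb Hne) as [L [HL1 HL2]].
  assert (Hup : forall n, itr f n x <= L) by (intro n; apply HL1; exists n; auto).
  assert (Heps : forall eps, 0 < eps -> exists n, L - eps < itr f n x).
  { intros eps He. apply NNPP. intro Hn.
    assert (L <= L - eps). { apply HL2. intros y [n ->]. apply Rnot_lt_le. intro. apply Hn. exists n. auto. } lra. }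
  assert (Hinc : forall n, itr f n x <= itr f (S n) x).
  { induction n. simpl; auto. simpl. apply Hm. exact IHn. }
  exists L. split; [|split; [apply HL2; intros y [n ->]; apply HB | split; auto]].
  assert (H1 : L <= f L). { apply HL2. intros y [n ->]. eapply Rle_trans. apply Hinc. simpl. apply Hm. apply Hup. }
  destruct (Req_dec (f L) L) as [e|ne]; auto.
  destruct (cont_eps f L (Hc L) (f L - L)) as [d [Hd Hd']]. lra.
  destruct (Heps d Hd) as [n Hn].
  assert (Rabs (itr f n x - L) < d). { specialize (Hup n). rewrite Rabs_left1; lra. }
  apply Hd' in H. specialize (Hup (S n)). simpl in Hup.
  apply Rabs_def2 in H. lra.
Qed.

Definition refl (f : R -> R) := fun y => - f (- y).

Lemma itr_refl f n y : itr (refl f) n y = - itr f n (- y).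
Proof. induction n; simpl. lra. rewrite IHn. unfold refl. rewrite Ropp_involutive. auto. Qed.

Lemma refl_cont f y : continuity_pt f (- y) -> continuity_pt (refl f) y.
Proof.
  intro H. apply eps_cont. intros eps He. destruct (cont_eps f _ H eps He) as [d [Hd Hd']].
  exists d. split; auto. intros z Hz. unfold refl.
  replace (- f (- z) - - f (- y)) with (- (f (-z) - f (-y))) by ring. rewrite Rabs_Ropp.
  apply Hd'. replace (- z - - y) with (- (z - y)) by ring. rewrite Rabs_Ropp; auto.
Qed.

Lemma orbit_dec (f : R -> R) (x B : R) :
  (forall y, continuity_pt f y) -> (forall y z, y <= z -> f y <= f z) ->
  f x <= x -> (forall n, B <= itr f n x) ->
  exists L, f L = L /\ B <= L /\ (forall n, L <= itr f n x) /\
    (forall eps, 0 < eps -> exists n, itr f n x < L + eps).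
Proof.
  intros Hc Hm Hx HB.
  destruct (orbit_inc (refl f) (- x) (- B)) as [L [H1 [H2 [H3 H4]]]].
  - intro y. apply refl_cont. auto.
  - intros y z Hyz. unfold refl. apply Ropp_le_contravar. apply Hm. lra.
  - unfold refl. rewrite Ropp_involutive. lra.
  - intro n. rewrite itr_refl, Ropp_involutive. specialize (HB n). lra.
  - exists (- L). unfold refl in H1. split. lra. split. lra. split.
  intro n. specialize (H3 n). rewrite itr_refl, Ropp_involutive in H3. lra.
  intros eps He. destruct (H4 eps He) as [n Hn]. exists n. rewrite itr_refl, Ropp_involutive in Hn. lra.
Qed.

Lemma exp_bound c d : 0 <= c -> 0 <= d -> 1 + c * d <= exp (c * d).
Proof. intros. apply exp_ineq1_le. Qed.

Section Kop.
Variables (G dG u du : R -> R) (a x0 mu M : R).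
Hypotheses (Hax : a < x0) (Hmu : 0 < mu) (HM : 0 <= M)
  (HdG : forall y, derivable_pt_lim G y (dG y))
  (Hmu' : forall s, a <= s <= x0 -> mu <= dG s)
  (HLip : forall s t, a <= s <= x0 -> a <= t <= x0 -> Rabs (dG s - dG t) <= M * Rabs (s - t))
  (HGinc : forall s t, s < t -> G s < G t)
  (HGa : G a = a) (HGlt : forall s, a < s <= x0 -> G s < s)
  (Hdu : forall y, derivable_pt_lim u y (du y)) (Hduc : continuity_pt du a)
  (Humon : forall s t, s <= t -> u s <= u t)
  (Hcomm : forall y, u (G y) = G (u y)) (Hux0 : u x0 = x0) (Hua : u a = a).

Let Gm := smono_mono G HGinc.
Let Gc : forall y, continuity_pt G y := fun y => dcont G y _ (HdG y).
Let uc : forall y, continuity_pt u y := fun y => dcont u y _ (Hdu y).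

Lemma K1 n : a < itr G n x0 <= x0.
Proof. induction n; simpl. lra. split. rewrite <- HGa. apply HGinc. lra.
  assert (G (itr G n x0) < itr G n x0) by (apply HGlt; lra). lra. Qed.

Lemma K1b n : itr G (S n) x0 < itr G n x0.
Proof. simpl. apply HGlt. apply K1. Qed.

Lemma K1c n xi : G x0 <= xi <= x0 -> itr G (S n) x0 <= itr G n xi <= itr G n x0.
Proof. intros [h1 h2]. rewrite itr_S'. split; apply itr_mono; auto. Qed.

Lemma K2 eps : 0 < eps -> exists N, itr G N x0 < a + eps.
Proof.
  intro He. destruct (orbit_dec G x0 a Gc Gm) as [L [H1 [H2 [H3 H4]]]].
  - left. apply HGlt. lra.
  - intro n. left. apply K1.
  - assert (L = a). { destruct H2 as [h|h]; auto. specialize (H3 O). simpl in H3.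
      assert (G L < L) by (apply HGlt; lra). lra. }
    subst L. apply H4; auto.
Qed.

Let c := M / mu.

Lemma c_nonneg : 0 <= c.
Proof. unfold c. apply Rmult_le_pos; auto. left; apply Rinv_0_lt_compat; auto. Qed.

Lemma ditr_pos n xi : G x0 <= xi <= x0 -> 0 < ditr G dG n xi.
Proof.
  intro Hxi. induction n; simpl. lra. apply Rmult_lt_0_compat; auto.
  assert (h := K1c n xi Hxi). assert (h' := K1 (S n)). assert (h'' := K1 n).
  assert (mu <= dG (itr G n xi)) by (apply Hmu'; lra). lra.
Qed.

Lemma dG_ratio s t : a <= s <= x0 -> a <= t <= x0 -> exp (- (c * Rabs (s - t))) * dG t <= dG s.
Proof.
  intros Hs Ht. assert (h1 := HLip t s Ht Hs). assert (h2 := Hmu' s Hs).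
  assert (dG t <= dG s * (1 + c * Rabs (s - t))).
  { assert (Rabs (t - s) = Rabs (s - t)) by (rewrite Rabs_minus_sym; auto).
    assert (dG t - dG s <= M * Rabs (s - t)) by (rewrite <- H; eapply Rle_trans; [apply Rle_abs|auto]).
    assert (M * Rabs (s - t) <= dG s * (c * Rabs (s - t))).
    { unfold c. replace (dG s * (M / mu * Rabs (s - t))) with ((dG s / mu) * (M * Rabs (s - t))) by (field; lra).
      rewrite <- (Rmult_1_l (M * Rabs (s - t))) at 1. apply Rmult_le_compat_r.
      apply Rmult_le_pos; auto. apply Rabs_pos. apply (Rmult_le_reg_r mu); auto.
      field_simplify; lra. }
    nra. }
  assert (0 <= c * Rabs (s - t)) by (apply Rmult_le_pos; [apply c_nonneg|apply Rabs_pos]).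
  assert (1 + c * Rabs (s - t) <= exp (c * Rabs (s - t))) by apply exp_ineq1_le.
  assert (dG t <= dG s * exp (c * Rabs (s - t))) by (eapply Rle_trans; [eauto|apply Rmult_le_compat_l; lra]).
  rewrite exp_Ropp. apply (Rmult_le_reg_l (exp (c * Rabs (s - t)))). apply exp_pos.
  rewrite <- Rmult_assoc, Rinv_r. lra. apply Rgt_not_eq, exp_pos.
Qed.

Lemma K4 n xi eta : G x0 <= xi <= x0 -> G x0 <= eta <= x0 ->
  exp (- (c * (x0 - itr G n x0))) * ditr G dG n eta <= ditr G dG n xi.
Proof.
  intros Hxi Heta. induction n; simpl.
  - replace (x0 - x0) with 0 by ring. rewrite Rmult_0_r, Ropp_0, exp_0. lra.
  - set (s := itr G n xi). set (t := itr G n eta).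
    assert (hs := K1c n xi Hxi). assert (ht := K1c n eta Heta). assert (k := K1 (S n)). simpl in k.
    assert (Rabs (s - t) <= itr G n x0 - G (itr G n x0)).
    { unfold s, t. simpl in hs, ht. apply Rabs_le. split; lra. }
    simpl in hs, ht. assert (k0 := K1 n).
    assert (h1 := dG_ratio s t ltac:(unfold s; split; lra) ltac:(unfold t; split; lra)).
    assert (exp (- (c * (itr G n x0 - G (itr G n x0)))) <= exp (- (c * Rabs (s - t)))).
    { apply exp_le_3 || idtac. destruct (Req_dec (c * (itr G n x0 - G (itr G n x0))) (c * Rabs (s - t))) as [e|ne].
      rewrite e; lra. left. apply exp_increasing. assert (h := c_nonneg).
      assert (c * Rabs (s - t) <= c * (itr G n x0 - G (itr G n x0))) by (apply Rmult_le_compat_l; auto). lra. }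
    replace (- (c * (x0 - G (itr G n x0)))) with (- (c * (itr G n x0 - G (itr G n x0))) + - (c * (x0 - itr G n x0))) by ring.
    rewrite exp_plus.
    assert (0 < ditr G dG n eta) by (apply ditr_pos; auto).
    assert (0 < dG t). { assert (mu <= dG t) by (apply Hmu'; unfold t; simpl in ht; lra). lra. }
    assert (0 < exp (- (c * (itr G n x0 - G (itr G n x0))))) by apply exp_pos.
    assert (0 < exp (- (c * (x0 - itr G n x0)))) by apply exp_pos.
    replace (exp (- (c * (itr G n x0 - G (itr G n x0)))) * exp (- (c * (x0 - itr G n x0))) * (dG t * ditr G dG n eta))
      with ((exp (- (c * (itr G n x0 - G (itr G n x0)))) * dG t) * (exp (- (c * (x0 - itr G n x0))) * ditr G dG n eta)) by ring.
    apply Rmult_le_compat; try (apply Rmult_le_pos; lra).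
    eapply Rle_trans; [|apply h1]. apply Rmult_le_compat_r; lra. exact IHn.
Qed.

Lemma K5 m n xi : ditr u du m xi * ditr G dG n (itr u m xi) = ditr u du m (itr G n xi) * ditr G dG n xi.
Proof.
  assert (h1 : derivable_pt_lim (comp (itr u m) (itr G n)) xi (ditr u du m (itr G n xi) * ditr G dG n xi)).
  { apply derivable_pt_lim_comp; apply ditr_ok; auto. }
  assert (h2 : derivable_pt_lim (comp (itr G n) (itr u m)) xi (ditr G dG n (itr u m xi) * ditr u du m xi)).
  { apply derivable_pt_lim_comp; apply ditr_ok; auto. }
  assert (E : comp (itr u m) (itr G n) = comp (itr G n) (itr u m)).
  { apply functional_extensionality. intro y. unfold comp. apply itr_comm. auto. }
  rewrite E in h1. rewrite Rmult_comm. symmetry. eapply uniqueness_limite; eauto.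
Qed.

Lemma K6 : du a = 1.
Proof.
  destruct (Req_dec (du a) 1) as [e|ne]; auto. exfalso.
  assert (He : 0 < Rabs (1 - du a)) by (apply Rabs_pos_lt; lra).
  destruct (Hdu a _ He) as [d Hd].
  destruct (K2 d (cond_pos d)) as [N HN].
  set (h := itr G N x0 - a).
  assert (hpos : 0 < h) by (unfold h; assert (k := K1 N); lra).
  assert (h0 : h <> 0) by lra.
  assert (hd : Rabs h < d) by (rewrite Rabs_pos_eq by lra; unfold h; lra).
  specialize (Hd h h0 hd).
  replace (a + h) with (itr G N x0) in Hd by (unfold h; ring).
  rewrite itr_comm1, Hux0, Hua in Hd by auto.
  replace (itr G N x0 - a) with h in Hd by reflexivity. unfold Rdiv in Hd. rewrite Rinv_r in Hd by lra. rewrite Rabs_minus_sym in Hd. lra.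
Qed.

Lemma K6b m : continuity_pt (ditr u du m) a /\ ditr u du m a = 1.
Proof.
  induction m as [|m [IH1 IH2]]; simpl.
  - split; auto. apply eps_cont. intros eps He. exists 1. split. lra. intros. rewrite Rminus_diag, Rabs_R0; auto.
  - split.
    + change (continuity_pt (mult_fct (comp du (itr u m)) (ditr u du m)) a).
      apply continuity_pt_mult; auto. apply continuity_pt_comp. apply itr_cont; auto.
      rewrite itr_fix; auto.
    + rewrite itr_fix, K6, IH2; auto; ring.
Qed.

Lemma u_I m y : G x0 <= y <= x0 -> G x0 <= itr u m y <= x0.
Proof.
  intro Hy. induction m; simpl; auto. split.
  - rewrite <- Hux0 at 1. rewrite <- Hcomm. apply Humon. lra.
  - rewrite <- Hux0. apply Humon. lra.
Qed.

Let kap := exp (- (c * (x0 - a))).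

Lemma K7 m xi : G x0 <= xi <= x0 -> kap / 2 <= ditr u du m xi.
Proof.
  intro Hxi. destruct (K6b m) as [Hc H1].
  destruct (cont_eps _ _ Hc (1/2)) as [d [Hd Hd']]. lra.
  destruct (K2 d Hd) as [N HN].
  set (s := itr G N xi).
  assert (hs : a < s <= itr G N x0).
  { unfold s. assert (k := K1c N xi Hxi). assert (k2 := K1 (S N)). split; lra. }
  assert (Hs : 1/2 < ditr u du m s).
  { assert (Rabs (s - a) < d) by (rewrite Rabs_pos_eq; lra). apply Hd' in H. rewrite H1 in H.
    apply Rabs_def2 in H. lra. }
  assert (E := K5 m N xi). fold s in E.
  assert (Hum := u_I m xi Hxi).
  assert (D1 := K4 N xi (itr u m xi) Hxi Hum).
  assert (Dp := ditr_pos N (itr u m xi) Hum).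
  assert (kap <= exp (- (c * (x0 - itr G N x0)))).
  { unfold kap. assert (k := K1 N). assert (h := c_nonneg).
    assert (c * (x0 - itr G N x0) <= c * (x0 - a)) by (apply Rmult_le_compat_l; lra).
    destruct (Req_dec (c * (x0 - itr G N x0)) (c * (x0 - a))) as [e|ne]. rewrite e; lra.
    left. apply exp_increasing. lra. }
  assert (0 < kap) by apply exp_pos.
  apply (Rmult_le_reg_r (ditr G dG N (itr u m xi))); auto.
  rewrite E.
  assert (kap * ditr G dG N (itr u m xi) <= ditr G dG N xi).
  { eapply Rle_trans; [|apply D1]. apply Rmult_le_compat_r; lra. }
  assert (0 <= ditr G dG N xi) by (left; apply ditr_pos; auto).
  replace (kap / 2 * ditr G dG N (itr u m xi)) with (1/2 * (kap * ditr G dG N (itr u m xi))) by field.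
  apply Rmult_le_compat; try lra. apply Rmult_le_pos; lra.
Qed.

Lemma kopell_core : forall y, G x0 <= y <= x0 -> u y = y.
Proof.
  intros y Hy. apply NNPP. intro ne.
  assert (Hk : 0 < kap / 2) by (assert (0 < kap) by apply exp_pos; lra).
  assert (Huy := u_I 1 y Hy). simpl in Huy.
  assert (Step : forall m, kap / 2 * Rabs (u y - y) <= Rabs (itr u (S m) y - itr u m y)).
  { intro m. rewrite itr_S'.
    destruct (Rtotal_order y (u y)) as [lt|[eq|gt]].
    - destruct (MVT_cor2 (itr u m) (ditr u du m) y (u y) lt) as [z [Ez Hz]].
      { intros. apply ditr_ok; auto. }
      rewrite Ez. rewrite Rabs_mult. rewrite (Rabs_pos_eq (ditr u du m z)).
      apply Rmult_le_compat_r. apply Rabs_pos. apply K7. lra.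
      assert (kap / 2 <= ditr u du m z) by (apply K7; lra). lra.
    - congruence.
    - destruct (MVT_cor2 (itr u m) (ditr u du m) (u y) y gt) as [z [Ez Hz]].
      { intros. apply ditr_ok; auto. }
      rewrite (Rabs_minus_sym (itr u m (u y)) (itr u m y)), Ez, (Rabs_minus_sym (u y) y).
      rewrite Rabs_mult. rewrite (Rabs_pos_eq (ditr u du m z)).
      apply Rmult_le_compat_r. apply Rabs_pos. apply K7. lra.
      assert (kap / 2 <= ditr u du m z) by (apply K7; lra). lra. }
  assert (Hpos : 0 < Rabs (u y - y)) by (apply Rabs_pos_lt; lra).
  assert (Sum : forall N, INR N * (kap / 2 * Rabs (u y - y)) <= Rabs (itr u N y - y)).
  { destruct (Rtotal_order y (u y)) as [lt|[eq|gt]]; [| congruence |].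
    - assert (Inc : forall m, itr u m y <= itr u (S m) y).
      { induction m. simpl. lra. simpl. apply Humon. exact IHm. }
      assert (Ge : forall N, y <= itr u N y).
      { induction N. simpl; lra. specialize (Inc N). lra. }
      induction N. simpl. rewrite Rmult_0_l. apply Rabs_pos.
      rewrite S_INR. specialize (Step N). specialize (Inc N).
      assert (h1 := Ge N). assert (h2 := Ge (S N)).
      rewrite (Rabs_pos_eq (itr u (S N) y - itr u N y)) in Step by lra.
      rewrite (Rabs_pos_eq (itr u N y - y)) in IHN by lra.
      rewrite (Rabs_pos_eq (itr u (S N) y - y)) by lra. lra.
    - assert (Dec : forall m, itr u (S m) y <= itr u m y).
      { induction m. simpl. lra. simpl. apply Humon. exact IHm. }
      assert (Le : forall N, itr u N y <= y).
      { induction N. simpl; lra. specialize (Dec N). lra. }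
      induction N. simpl. rewrite Rmult_0_l. apply Rabs_pos.
      rewrite S_INR. specialize (Step N). specialize (Dec N).
      assert (h1 := Le N). assert (h2 := Le (S N)).
      rewrite (Rabs_left1 (itr u (S N) y - itr u N y)) in Step by lra.
      rewrite (Rabs_left1 (itr u N y - y)) in IHN by lra.
      rewrite (Rabs_left1 (itr u (S N) y - y)) by lra. lra. }
  destruct (INR_unbounded ((x0 - G x0) / (kap / 2 * Rabs (u y - y)))) as [N HN].
  specialize (Sum N). assert (hN := u_I N y Hy).
  assert (Rabs (itr u N y - y) <= x0 - G x0) by (apply Rabs_le; split; lra).
  assert (0 < kap / 2 * Rabs (u y - y)) by (apply Rmult_lt_0_compat; lra).
  apply Rmult_gt_compat_r with (r := kap / 2 * Rabs (u y - y)) in HN; auto.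
  replace ((x0 - G x0) / (kap / 2 * Rabs (u y - y)) * (kap / 2 * Rabs (u y - y))) with (x0 - G x0) in HN
    by (field; split; lra). lra.
Qed.
End Kop.

Lemma refl_deriv f df y : derivable_pt_lim f (- y) (df (- y)) -> derivable_pt_lim (refl f) y (df (- y)).
Proof.
  intros H eps He. destruct (H eps He) as [d Hd]. exists d. intros h h0 hd.
  unfold refl. replace ((- f (- (y + h)) - - f (- y)) / h) with ((f (- y + - h) - f (- y)) / - h).
  apply Hd. lra. rewrite Rabs_Ropp; auto.
  replace (- (y + h)) with (- y + - h) by ring. field. auto.
Qed.

Lemma cont_neg f y : continuity_pt f (- y) -> continuity_pt (fun z => f (- z)) y.
Proof.
  intro H. apply eps_cont. intros eps He. destruct (cont_eps f _ H eps He) as [d [Hd Hd']].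
  exists d. split; auto. intros z Hz. apply Hd'. replace (- z - - y) with (- (z - y)) by ring. rewrite Rabs_Ropp; auto.
Qed.

Lemma kopell_core_right (G dG u du : R -> R) (b x0 mu M : R) :
  x0 < b -> 0 < mu -> 0 <= M ->
  (forall y, derivable_pt_lim G y (dG y)) ->
  (forall s, x0 <= s <= b -> mu <= dG s) ->
  (forall s t, x0 <= s <= b -> x0 <= t <= b -> Rabs (dG s - dG t) <= M * Rabs (s - t)) ->
  (forall s t, s < t -> G s < G t) ->
  G b = b -> (forall s, x0 <= s < b -> s < G s) ->
  (forall y, derivable_pt_lim u y (du y)) -> continuity_pt du b ->
  (forall s t, s <= t -> u s <= u t) ->
  (forall y, u (G y) = G (u y)) -> u x0 = x0 -> u b = b ->
  forall y, x0 <= y <= G x0 -> u y = y.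
Proof.
  intros Hxb Hmu HM HdG Hmu' HL Hinc HGb HGgt Hdu Hduc Hum Hcomm Hux0 Hub y Hy.
  assert (K := kopell_core (refl G) (fun z => dG (- z)) (refl u) (fun z => du (- z)) (- b) (- x0) mu M).
  assert (E : refl u (- y) = - y).
  { apply K; clear K; auto; try lra.
    - intro z. apply refl_deriv. auto.
    - intros s Hs. apply Hmu'. lra.
    - intros s t Hs Ht. replace (s - t) with (- (- s - - t)) by ring. rewrite Rabs_Ropp. apply HL; lra.
    - intros s t Hst. unfold refl. apply Ropp_lt_contravar. apply Hinc. lra.
    - unfold refl. rewrite Ropp_involutive, HGb. auto.
    - intros s Hs. unfold refl. assert (- s < G (- s)) by (apply HGgt; lra). lra.
    - intro z. apply refl_deriv. auto.
    - apply cont_neg. rewrite Ropp_involutive; auto.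
    - intros s t Hst. unfold refl. apply Ropp_le_contravar. apply Hum. lra.
    - intro z. unfold refl. rewrite !Ropp_involutive, Hcomm. auto.
    - unfold refl. rewrite Ropp_involutive, Hux0. auto.
    - unfold refl. rewrite Ropp_involutive, Hub. auto.
    - unfold refl. rewrite Ropp_involutive. lra. }
  unfold refl in E. rewrite Ropp_involutive in E. lra.
Qed.

Lemma orbit_to_a (G : R -> R) a b s :
  (forall y, continuity_pt G y) -> (forall s t, s < t -> G s < G t) -> G a = a ->
  (forall s, a < s < b -> G s < s) -> a < s < b ->
  (forall n, a < itr G n s <= s) /\ (forall eps, 0 < eps -> exists n, itr G n s < a + eps).
Proof.
  intros Hc Hinc Ha Hlt Hs.
  assert (H1 : forall n, a < itr G n s <= s).
  { induction n; simpl. lra. split. rewrite <- Ha. apply Hinc. lra.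
    assert (G (itr G n s) < itr G n s) by (apply Hlt; lra). lra. }
  split; auto. intros eps He.
  destruct (orbit_dec G s a Hc (smono_mono G Hinc)) as [L [L1 [L2 [L3 L4]]]].
  - left; apply Hlt; auto.
  - intro n; left; apply H1.
  - assert (L = a). { destruct L2 as [h|h]; auto. specialize (L3 O). simpl in L3.
      assert (G L < L) by (apply Hlt; lra). lra. }
    subst L; auto.
Qed.

Lemma kopell_free_left (G dG u du : R -> R) (a b mu M t0 : R) :
  a < b -> 0 < mu -> 0 <= M ->
  (forall y, derivable_pt_lim G y (dG y)) ->
  (forall s, a <= s <= b -> mu <= dG s) ->
  (forall s t, a <= s <= b -> a <= t <= b -> Rabs (dG s - dG t) <= M * Rabs (s - t)) ->
  (forall s t, s < t -> G s < G t) ->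
  G a = a -> (forall s, a < s < b -> G s < s) ->
  (forall y, derivable_pt_lim u y (du y)) -> continuity_pt du a ->
  (forall s t, s <= t -> u s <= u t) ->
  (forall y, u (G y) = G (u y)) -> u a = a ->
  a < t0 < b -> u t0 = t0 ->
  forall t, a < t < b -> u t = t.
Proof.
  intros Hab Hmu HM HdG Hmu' HL Hinc HGa HGlt Hdu Hduc Hum Hcomm Hua Ht0 Hut0.
  assert (Gc : forall y, continuity_pt G y) by (intro y; eapply dcont; eauto).
  assert (Core : forall y, G t0 <= y <= t0 -> u y = y).
  { apply (kopell_core G dG u du a t0 mu M); auto; try lra.
    - intros s Hs; apply Hmu'; lra.
    - intros s t Hs Ht; apply HL; lra.
    - intros s Hs; apply HGlt; lra. }
  destruct (orbit_to_a G a b t0 Gc Hinc HGa HGlt Ht0) as [O1 O2].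
  assert (Im : forall m s, itr G (S m) t0 <= s <= itr G m t0 -> u s = s).
  { intros m s Hs. rewrite itr_S' in Hs.
    destruct (IVT_cor (fun x => itr G m x - s) (G t0) t0) as [z [Hz Ez]].
    - intro x. apply continuity_pt_minus. apply itr_cont; auto. apply continuity_pt_const. intros p q; auto.
    - assert (G t0 < t0) by (apply HGlt; lra). lra.
    - assert (itr G m (G t0) - s <= 0) by lra. assert (0 <= itr G m t0 - s) by lra.
      simpl. nra.
    - simpl in Ez. assert (s = itr G m z) by lra. subst s.
      rewrite itr_comm1; auto. rewrite Core; auto. }
  assert (Low : forall s, a < s <= t0 -> u s = s).
  { intros s Hs. destruct (O2 (s - a)) as [N HN]. lra.
    assert (forall N, itr G N t0 < s -> exists m, itr G (S m) t0 <= s <= itr G m t0).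
    { induction N0; intro h. simpl in h. lra.
      destruct (Rlt_le_dec (itr G N0 t0) s) as [l|l]. apply IHN0; auto.
      exists N0. split; lra. }
    destruct (H N) as [m Hm]. lra. apply (Im m); auto. }
  intros t Ht. destruct (Rle_dec t t0) as [l|l]. apply Low; lra.
  destruct (orbit_to_a G a b t Gc Hinc HGa HGlt Ht) as [P1 P2].
  destruct (P2 (t0 - a)) as [n Hn]. lra.
  assert (E : u (itr G n t) = itr G n t) by (apply Low; specialize (P1 n); lra).
  rewrite itr_comm1 in E; auto.
  eapply smono_inj. intros p q; apply itr_smono; auto. exact E.
Qed.

Lemma kopell_free_right (G dG u du : R -> R) (a b mu M t0 : R) :
  a < b -> 0 < mu -> 0 <= M ->
  (forall y, derivable_pt_lim G y (dG y)) ->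
  (forall s, a <= s <= b -> mu <= dG s) ->
  (forall s t, a <= s <= b -> a <= t <= b -> Rabs (dG s - dG t) <= M * Rabs (s - t)) ->
  (forall s t, s < t -> G s < G t) ->
  G b = b -> (forall s, a < s < b -> s < G s) ->
  (forall y, derivable_pt_lim u y (du y)) -> continuity_pt du b ->
  (forall s t, s <= t -> u s <= u t) ->
  (forall y, u (G y) = G (u y)) -> u b = b ->
  a < t0 < b -> u t0 = t0 ->
  forall t, a < t < b -> u t = t.
Proof.
  intros Hab Hmu HM HdG Hmu' HL Hinc HGb HGgt Hdu Hduc Hum Hcomm Hub Ht0 Hut0 t Ht.
  assert (K := kopell_free_left (refl G) (fun z => dG (- z)) (refl u) (fun z => du (- z)) (- b) (- a) mu M (- t0)).
  assert (E : refl u (- t) = - t).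
  { apply K; clear K; auto; try lra.
    - intro z. apply refl_deriv. auto.
    - intros s Hs. apply Hmu'. lra.
    - intros s t1 Hs Ht1. replace (s - t1) with (- (- s - - t1)) by ring. rewrite Rabs_Ropp. apply HL; lra.
    - intros s t1 Hst. unfold refl. apply Ropp_lt_contravar. apply Hinc. lra.
    - unfold refl. rewrite Ropp_involutive, HGb. auto.
    - intros s Hs. unfold refl. assert (- s < G (- s)) by (apply HGgt; lra). lra.
    - intro z. apply refl_deriv. auto.
    - apply cont_neg. rewrite Ropp_involutive; auto.
    - intros s t1 Hst. unfold refl. apply Ropp_le_contravar. apply Hum. lra.
    - intro z. unfold refl. rewrite !Ropp_involutive, Hcomm. auto.
    - unfold refl. rewrite Ropp_involutive, Hub. auto.
    - unfold refl. rewrite Ropp_involutive, Hut0. auto. }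
  unfold refl in E. rewrite Ropp_involutive in E. lra.
Qed.

Definition inv (u : R -> R) (y : R) : R := epsilon (inhabits 0) (fun x => u x = y).

Lemma inv_r u y : (exists x, u x = y) -> u (inv u y) = y.
Proof. intro H. unfold inv. apply (epsilon_spec (inhabits 0) (fun x => u x = y)). auto. Qed.

Section Holder.
Variables (P : (R -> R) -> Prop) (a b : R).
Hypotheses (Hab : a < b) (Pid : P (fun x => x))
  (Pcomp : forall u v, P u -> P v -> P (fun x => u (v x)))
  (Pinv : forall u, P u -> P (inv u))
  (Pinc : forall u, P u -> forall s t, s < t -> u s < u t)
  (Psurj : forall u, P u -> forall y, exists x, u x = y)
  (Pcont : forall u, P u -> forall x, continuity_pt u x)
  (Pab : forall u, P u -> u a = a /\ u b = b)
  (Pfree : forall u, P u -> forall t0, a < t0 < b -> u t0 = t0 -> forall t, a < t < b -> u t = t).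

Definition In t := a < t < b.
Definition ltf (u v : R -> R) := forall t, In t -> u t < v t.
Definition lef (u v : R -> R) := forall t, In t -> u t <= v t.
Definition eqf (u v : R -> R) := forall t, In t -> u t = v t.
Definition idf := fun x : R => x.

Let mid := (a + b) / 2.
Lemma mid_in : In mid.
Proof. unfold In, mid; split; lra. Qed.

Lemma Pinv_r u y : P u -> u (inv u y) = y.
Proof. intro H. apply inv_r. apply Psurj; auto. Qed.

Lemma Pinv_l u x : P u -> inv u (u x) = x.
Proof. intro H. apply (smono_inj u (Pinc u H)). apply Pinv_r; auto. Qed.

Lemma maps_in u t : P u -> In t -> In (u t).
Proof. intros H [h1 h2]. destruct (Pab u H) as [e1 e2]. split.
  rewrite <- e1. apply Pinc; auto. rewrite <- e2. apply Pinc; auto. Qed.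

Lemma inv_lt u y z : P u -> (inv u y < z <-> y < u z).
Proof. intro H. split; intro h.
  - rewrite <- (Pinv_r u y H). apply Pinc; auto.
  - destruct (Rlt_le_dec (inv u y) z) as [l|l]; auto.
    assert (u z <= u (inv u y)) by (apply (smono_mono u (Pinc u H)); auto).
    rewrite Pinv_r in H0; auto. lra. Qed.

Lemma inv_gt u y z : P u -> (z < inv u y <-> u z < y).
Proof. intro H. split; intro h.
  - rewrite <- (Pinv_r u y H). apply Pinc; auto.
  - destruct (Rlt_le_dec z (inv u y)) as [l|l]; auto.
    assert (u (inv u y) <= u z) by (apply (smono_mono u (Pinc u H)); auto).
    rewrite Pinv_r in H0; auto. lra. Qed.

Lemma Pitr e n : P e -> P (itr e n).
Proof. intro H. induction n. exact Pid. exact (Pcomp e (itr e n) H IHn). Qed.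

Lemma sign_const w : P w -> (forall t, In t -> w t <> t) -> ltf w idf \/ ltf idf w.
Proof.
  intros Hw Hne.
  assert (Hc : continuity (fun x => w x - x)).
  { intro x. apply continuity_pt_minus. apply Pcont; auto. apply derivable_continuous_pt, derivable_pt_id. }
  assert (Z : forall s t, In s -> In t -> s <= t -> (w s - s) * (w t - t) <= 0 -> False).
  { intros s t Hs Ht Hst Hp. destruct (IVT_cor _ s t Hc Hst Hp) as [z [Hz Ez]].
    apply (Hne z). unfold In in *; split; lra. lra. }
  destruct (Rlt_le_dec (w mid) mid) as [l|l].
  - left. intros t Ht. destruct (Rlt_le_dec (w t) t) as [l'|l']; auto. exfalso.
    destruct (Rle_dec mid t). apply (Z mid t mid_in Ht); auto. nra.
    apply (Z t mid Ht mid_in). lra. nra.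
  - right. intros t Ht. unfold idf. destruct (Rlt_le_dec t (w t)) as [l'|l']; auto. exfalso.
    assert (w mid <> mid) by (apply Hne, mid_in).
    destruct (Rle_dec mid t). apply (Z mid t mid_in Ht); auto. nra.
    apply (Z t mid Ht mid_in). lra. nra.
Qed.

Lemma total u v : P u -> P v -> eqf u v \/ ltf u v \/ ltf v u.
Proof.
  intros Hu Hv. set (w := fun x => inv v (u x)).
  assert (Hw : P w) by exact (Pcomp _ _ (Pinv v Hv) Hu).
  destruct (classic (exists t0, In t0 /\ w t0 = t0)) as [[t0 [Ht0 E]]|N].
  - left. intros t Ht. assert (w t = t) by (apply (Pfree w Hw t0); auto).
    unfold w in H. rewrite <- H at 2. rewrite Pinv_r; auto.
  - assert (forall t, In t -> w t <> t) by (intros t Ht E; apply N; eauto).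
    destruct (sign_const w Hw H) as [L|L].
    + right; left. intros t Ht. specialize (L t Ht). unfold w, idf in L.
      apply inv_lt in L; auto.
    + right; right. intros t Ht. specialize (L t Ht). unfold w, idf in L.
      apply inv_gt in L; auto.
Qed.

Lemma arch e u : P e -> ltf idf e -> P u -> exists N, ltf u (itr e N).
Proof.
  intros He He' Hu. apply NNPP. intro N.
  assert (Le : forall n, itr e n mid <= u mid).
  { intro n. destruct (total u (itr e n) Hu (Pitr e n He)) as [E|[L|L]].
    - rewrite E; auto. lra. apply mid_in.
    - exfalso; apply N; eauto.
    - left; apply L, mid_in. }
  destruct (orbit_inc e mid (u mid) (Pcont e He) (smono_mono e (Pinc e He))) as [L [L1 [L2 [L3 L4]]]].
  - left. apply He', mid_in.
  - auto.
  - assert (mid <= L) by apply (L3 O).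
    assert (In (u mid)) by (apply maps_in; auto; apply mid_in).
    assert (In L) by (unfold In, mid in *; split; lra).
    specialize (He' L H1). unfold idf in He'. lra.
Qed.

Lemma floor e f : P e -> ltf idf e -> P f -> lef idf f ->
  exists m, lef (itr e m) f /\ ltf f (itr e (S m)).
Proof.
  intros He He' Hf Hf'. destruct (arch e f He He' Hf) as [N HN].
  induction N.
  - exfalso. specialize (HN mid mid_in). specialize (Hf' mid mid_in). simpl in HN. unfold idf in Hf'. lra.
  - destruct (total f (itr e N) Hf (Pitr e N He)) as [E|[L|L]].
    + exists N. split; auto. intros t Ht. rewrite E; auto. lra.
    + apply IHN; auto.
    + exists N. split; auto. intros t Ht. left; apply L; auto.
Qed.

Definition commf (f h : R -> R) := forall t, In t -> f (h t) = h (f t).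

Lemma commf_sym f h : commf f h -> commf h f.
Proof. intros H t Ht. symmetry; auto. Qed.

Lemma reduce_pos f h : P f -> P h -> (forall f', P f' -> ltf idf f' -> commf f' h) -> commf f h.
Proof.
  intros Hf Hh H. destruct (total f idf Hf Pid) as [E|[L|L]].
  - intros t Ht. unfold idf in E. rewrite (E t Ht). apply E. apply maps_in; auto.
  - assert (Hi : ltf idf (inv f)).
    { intros t Ht. unfold idf. apply inv_gt; auto. }
    specialize (H (inv f) (Pinv f Hf) Hi).
    intros t Ht. set (s := f t). assert (Hs : In s) by (apply maps_in; auto).
    specialize (H s Hs). unfold s in H. rewrite Pinv_l in H; auto.
    rewrite <- H. rewrite Pinv_r; auto.
  - apply H; auto.
Qed.

Lemma main_strict f h : P f -> P h -> ltf idf f -> ltf idf h ->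
  ~ ltf (fun x => h (f x)) (fun x => f (h x)).
Proof.
  intros Hf Hh Hf' Hh' Hlt.
  set (hf := fun x => h (f x)). set (fh := fun x => f (h x)).
  assert (Phf : P hf) by exact (Pcomp _ _ Hh Hf).
  assert (Pfh : P fh) by exact (Pcomp _ _ Hf Hh).
  set (c := fun x => fh (inv hf x)).
  assert (Pc : P c) by exact (Pcomp _ _ Pfh (Pinv _ Phf)).
  assert (Hc : forall s, c (hf s) = fh s) by (intro s; unfold c; rewrite Pinv_l; auto).
  assert (Hc' : ltf idf c).
  { intros t Ht. unfold idf, c. set (s := inv hf t).
    assert (In s) by (unfold s; apply maps_in; auto).
    rewrite <- (Pinv_r hf t Phf). fold s. apply Hlt; auto. }
  assert (CaseA : forall e, P e -> ltf idf e -> lef (fun x => e (e x)) c -> False).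
  { intros e He He' Hee.
    destruct (floor e f He He' Hf) as [m [Hm1 Hm2]]. { intros t Ht; left; apply Hf'; auto. }
    destruct (floor e h He He' Hh) as [n [Hn1 Hn2]]. { intros t Ht; left; apply Hh'; auto. }
    assert (Hm := mid_in). set (s := mid).
    assert (Hhs : In (h s)) by (apply maps_in; auto).
    assert (Hfs : In (f s)) by (apply maps_in; auto).
    assert (A1 : fh s < itr e (S (S (n + m))) s).
    { unfold fh. eapply Rlt_trans. apply Hm2; auto.
      replace (S (S (n + m))) with (S m + S n)%nat by lia. rewrite itr_add.
      apply itr_smono. apply Pinc; auto. apply Hn2; auto. }
    assert (A2 : itr e (n + m) s <= hf s).
    { unfold hf. rewrite itr_add. eapply Rle_trans.
      2: apply Hn1; auto.
      apply itr_mono. apply smono_mono, Pinc; auto. apply Hm1; auto. }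
    assert (A3 : e (e (hf s)) <= c (hf s)) by (apply Hee; apply maps_in; auto).
    rewrite Hc in A3. simpl in A1.
    assert (e (e (itr e (n + m) s)) <= e (e (hf s))).
    { apply (smono_mono e (Pinc e He)). apply (smono_mono e (Pinc e He)). auto. }
    lra. }
  assert (Min : forall e, P e -> ltf idf e -> lef c e).
  { intros e He He'. destruct (total c e Pc He) as [E|[L|L]].
    - intros t Ht. rewrite E; auto. lra.
    - intros t Ht. left; auto.
    - exfalso. destruct (total (fun x => e (e x)) c (Pcomp _ _ He He) Pc) as [E|[L2|L2]].
      + apply (CaseA e He He'). intros t Ht. rewrite E; auto. lra.
      + apply (CaseA e He He'). intros t Ht. left; auto.
      + set (e' := fun x => c (inv e x)).
        assert (Pe' : P e') by exact (Pcomp _ _ Pc (Pinv _ He)).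
        apply (CaseA e' Pe').
        * intros t Ht. unfold idf, e'. set (s := inv e t).
          assert (In s) by (unfold s; apply maps_in; auto).
          rewrite <- (Pinv_r e t He) at 1. fold s. apply L; auto.
        * intros t Ht. left.
          assert (E1 : e' (e t) = c t) by (unfold e'; rewrite Pinv_l; auto).
          rewrite <- E1. apply (Pinc e' Pe').
          unfold e'. set (s := inv e t).
          assert (In s) by (unfold s; apply maps_in; auto).
          rewrite <- (Pinv_r e t He). fold s. apply L2; auto. }
  assert (Pow : forall g, P g -> ltf idf g -> exists m, eqf g (itr c m)).
  { intros g Hg Hg'.
    destruct (floor c g Pc Hc' Hg) as [m [Hm1 Hm2]]. { intros t Ht; left; apply Hg'; auto. }
    exists m. set (w := fun x => inv (itr c m) (g x)).
    assert (Pw : P w) by exact (Pcomp _ _ (Pinv _ (Pitr c m Pc)) Hg).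
    destruct (total w idf Pw Pid) as [E|[L|L]].
    - intros t Ht. specialize (E t Ht). unfold w, idf in E.
      rewrite <- E at 2. rewrite Pinv_r; auto. apply Pitr; auto.
    - exfalso. specialize (L mid mid_in). unfold w, idf in L.
      apply (proj1 (inv_lt _ _ _ (Pitr c m Pc))) in L. specialize (Hm1 mid mid_in). lra.
    - exfalso. assert (Hcw := Min w Pw L mid mid_in).
      assert (w mid < c mid).
      { unfold w. apply inv_lt. apply Pitr; auto. rewrite <- itr_S'. apply Hm2, mid_in. }
      lra. }
  destruct (Pow f Hf Hf') as [m Em]. destruct (Pow h Hh Hh') as [n En].
  specialize (Hlt mid mid_in). cbv beta in Hlt.
  assert (I1 : In (h mid)) by (apply maps_in; auto; apply mid_in).
  assert (I2 : In (f mid)) by (apply maps_in; auto; apply mid_in).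
  rewrite (Em (h mid) I1), (En (f mid) I2), (En mid mid_in), (Em mid mid_in) in Hlt.
  rewrite <- !itr_add in Hlt. replace (n + m)%nat with (m + n)%nat in Hlt by lia. lra.
Qed.

Theorem holder f h : P f -> P h -> commf f h.
Proof.
  intros Hf Hh. apply reduce_pos; auto. intros f' Hf' Lf'.
  apply commf_sym. apply reduce_pos; auto. intros h' Hh' Lh'.
  apply commf_sym.
  destruct (total (fun x => f' (h' x)) (fun x => h' (f' x)) (Pcomp _ _ Hf' Hh') (Pcomp _ _ Hh' Hf')) as [E|[L|L]].
  - exact E.
  - exfalso. apply (main_strict h' f' Hh' Hf' Lh' Lf' L).
  - exfalso. apply (main_strict f' h' Hf' Hh' Lf' Lh' L).
Qed.
End Holder.

Definition C2L (G : R -> R) : Prop :=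
  (forall x, G (x + 1) = G x + 1) /\ (forall x, ex_derive G x) /\ (forall x, ex_derive (Derive G) x) /\
  (forall x, continuous (Derive (Derive G)) x) /\ (forall x, 0 < Derive G x).

Lemma deriv_pos_inc u du : (forall x, derivable_pt_lim u x (du x)) -> (forall x, 0 < du x) ->
  forall s t, s < t -> u s < u t.
Proof.
  intros Hd Hp s t Hst. destruct (MVT_cor2 u du s t Hst) as [c [E _]]. intros; auto.
  assert (0 < du c * (t - s)) by (apply Rmult_lt_0_compat; auto; lra). lra.
Qed.

Section C2.
Variable G : R -> R.
Hypothesis HG : C2L G.

Lemma C2_der x : derivable_pt_lim G x (Derive G x).
Proof. apply is_derive_Reals. apply Derive_correct. apply HG. Qed.

Lemma C2_der2 x : derivable_pt_lim (Derive G) x (Derive (Derive G) x).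
Proof. apply is_derive_Reals. apply Derive_correct. apply HG. Qed.

Lemma C2_dcont x : continuity_pt (Derive G) x.
Proof. eapply dcont. apply C2_der2. Qed.

Lemma C2_cont x : continuity_pt G x.
Proof. eapply dcont. apply C2_der. Qed.

Lemma C2_inc : forall s t, s < t -> G s < G t.
Proof. apply (deriv_pos_inc G (Derive G)). apply C2_der. apply HG. Qed.

Lemma C2_per_nat x n : G (x + INR n) = G x + INR n.
Proof.
  induction n. simpl. rewrite !Rplus_0_r; auto.
  rewrite S_INR. replace (x + (INR n + 1)) with ((x + INR n) + 1) by ring.
  destruct HG as [H1 _]. rewrite H1, IHn. ring.
Qed.

Lemma C2_per_nat' x n : G (x - INR n) = G x - INR n.
Proof.
  assert (h := C2_per_nat (x - INR n) n). replace (x - INR n + INR n) with x in h by ring. lra.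
Qed.

Lemma C2_surj y : exists x, G x = y.
Proof.
  destruct (INR_unbounded (Rabs y + Rabs (G 0))) as [N HN].
  assert (h1 := C2_per_nat 0 N). assert (h2 := C2_per_nat' 0 N).
  rewrite Rplus_0_l in h1. replace (0 - INR N) with (- INR N) in h2 by ring.
  assert (A1 := Rle_abs y). assert (A2 := Rle_abs (- y)). rewrite Rabs_Ropp in A2.
  assert (A3 := Rle_abs (G 0)). assert (A4 := Rle_abs (- G 0)). rewrite Rabs_Ropp in A4.
  destruct (IVT_cor (fun x => G x - y) (- INR N) (INR N)) as [z [_ Ez]].
  - intro x. apply continuity_pt_minus. apply C2_cont. apply continuity_pt_const. intros p q; auto.
  - lra.
  - rewrite h1, h2. assert (G 0 - INR N - y <= 0) by lra. assert (0 <= G 0 + INR N - y) by lra. nra.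
  - exists z. lra.
Qed.

Lemma C2_mu a b : a <= b -> exists mu, 0 < mu /\ forall s, a <= s <= b -> mu <= Derive G s.
Proof.
  intro Hab. destruct (continuity_ab_min (Derive G) a b Hab) as [m [Hm _]].
  intros; apply C2_dcont. exists (Derive G m). split. apply HG. auto.
Qed.

Lemma cont_abs f x : continuity_pt f x -> continuity_pt (fun y => Rabs (f y)) x.
Proof.
  intro H. apply eps_cont. intros eps He. destruct (cont_eps f x H eps He) as [d [Hd Hd']].
  exists d. split; auto. intros y Hy. eapply Rle_lt_trans. apply Rabs_triang_inv2. auto.
Qed.

Lemma C2_lip a b : a <= b -> exists M, 0 <= M /\
  forall s t, a <= s <= b -> a <= t <= b -> Rabs (Derive G s - Derive G t) <= M * Rabs (s - t).
Proof.
  intro Hab. destruct (continuity_ab_maj (fun y => Rabs (Derive (Derive G) y)) a b Hab) as [m [Hm _]].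
  { intros c Hc. apply cont_abs. apply continuity_pt_filterlim. apply HG. }
  exists (Rabs (Derive (Derive G) m)). split. apply Rabs_pos.
  assert (K : forall s t, a <= s <= b -> a <= t <= b -> s < t ->
    Rabs (Derive G s - Derive G t) <= Rabs (Derive (Derive G) m) * Rabs (s - t)).
  { intros s t Hs Ht Hst. destruct (MVT_cor2 (Derive G) (Derive (Derive G)) s t Hst) as [c [E Hc]].
    intros; apply C2_der2.
    rewrite Rabs_minus_sym, E, Rabs_mult, (Rabs_minus_sym s t).
    apply Rmult_le_compat_r. apply Rabs_pos. apply Hm. lra. }
  intros s t Hs Ht. destruct (Rtotal_order s t) as [l|[e|g]].
  - auto.
  - subst. rewrite !Rminus_diag, Rabs_R0. lra.
  - rewrite (Rabs_minus_sym s t), (Rabs_minus_sym (Derive G s)). auto.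
Qed.
End C2.

Lemma inv_mono u : (forall s t, s < t -> u s < u t) -> (forall y, exists x, u x = y) ->
  forall y1 y2, y1 < y2 -> inv u y1 < inv u y2.
Proof.
  intros Hi Hs y1 y2 H. destruct (Rlt_le_dec (inv u y1) (inv u y2)) as [l|l]; auto.
  assert (u (inv u y2) <= u (inv u y1)) by (apply smono_mono; auto).
  rewrite !inv_r in H0; auto. lra.
Qed.

Definition C1h (u du : R -> R) : Prop :=
  (forall x, derivable_pt_lim u x (du x)) /\ (forall x, continuity_pt du x) /\
  (forall x, 0 < du x) /\ (forall y, exists x, u x = y).

Lemma C1h_inv u du : C1h u du -> C1h (inv u) (fun y => / du (inv u y)).
Proof.
  intros [Hd [Hc [Hp Hs]]].
  assert (Hi := deriv_pos_inc u du Hd Hp).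
  assert (Im := inv_mono u Hi Hs).
  assert (Imw := smono_mono _ Im).
  assert (Hr : forall y, u (inv u y) = y) by (intro; apply inv_r; auto).
  assert (Hl : forall x, inv u (u x) = x) by (intro x; apply (smono_inj u Hi); auto).
  assert (Ic : forall y, continuity_pt (inv u) y).
  { intro y. set (x := inv u y).
    apply (continuity_pt_recip_interv u (inv u) (x - 1) (x + 1)).
    - lra.
    - intros p q _ h _. auto.
    - intros z _ _. unfold comp, id. auto.
    - intros z h1 h2. rewrite <- (Hl (x - 1)), <- (Hl (x + 1)). split; apply Imw; auto.
    - intros; eapply dcont; eauto.
    - unfold x. split; [rewrite <- (Hr y) at 2 | rewrite <- (Hr y) at 1]; apply Hi; lra. }
  split; [|split; [|split]].
  - intro y. set (x := inv u y).
    assert (Prf : forall a0, inv u (y - 1) <= a0 <= inv u (y + 1) -> derivable_pt u a0)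
      by (intros a0 _; exact (exist _ (du a0) (Hd a0))).
    assert (Hincr : inv u (y - 1) <= inv u y <= inv u (y + 1)) by (split; apply Imw; lra).
    assert (K := derivable_pt_lim_recip_interv u (inv u) (y - 1) (y + 1) y Prf (Ic y)
      ltac:(lra) ltac:(lra) Hincr ltac:(intros z _; unfold comp, id; auto)).
    assert (E : derive_pt u (inv u y) (Prf (inv u y) Hincr) = du (inv u y)).
    { apply derive_pt_eq_0. auto. }
    rewrite E in K. unfold x. replace (/ du (inv u y)) with (1 / du (inv u y)) by (field; apply Rgt_not_eq, Hp).
    apply K. apply Rgt_not_eq, Hp.
  - intro y. apply continuity_pt_inv. apply (continuity_pt_comp (inv u) du); auto. apply Rgt_not_eq, Hp.
  - intro y. apply Rinv_0_lt_compat, Hp.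
  - intro y. exists (u y). auto.
Qed.

Lemma C1h_comp u du v dv : C1h u du -> C1h v dv -> C1h (fun x => u (v x)) (fun x => du (v x) * dv x).
Proof.
  intros [Hd [Hc [Hp Hs]]] [Hd' [Hc' [Hp' Hs']]]. split; [|split; [|split]].
  - intro x. change (derivable_pt_lim (comp u v) x (du (v x) * dv x)). apply derivable_pt_lim_comp; auto.
  - intro x. change (continuity_pt (mult_fct (comp du v) dv) x). apply continuity_pt_mult; auto.
    apply continuity_pt_comp; auto. eapply dcont; eauto.
  - intro x. apply Rmult_lt_0_compat; auto.
  - intro y. destruct (Hs y) as [z Hz]. destruct (Hs' z) as [w Hw]. exists w. subst; auto.
Qed.

Section Comp.
Variables (G : R -> R) (a b : R).
Hypotheses (HG : C2L G) (Hab : a < b) (HGa : G a = a) (HGb : G b = b)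
  (Hfree : forall s, a < s < b -> G s <> s).

Definition PG (u : R -> R) : Prop :=
  (exists du, C1h u du) /\ (forall x, u (G x) = G (u x)) /\ u a = a /\ u b = b.

Lemma PG_free u : PG u -> forall t0, a < t0 < b -> u t0 = t0 -> forall t, a < t < b -> u t = t.
Proof.
  intros [[du [Hd [Hc [Hp Hs]]]] [Hcomm [Ha Hb]]] t0 Ht0 E.
  destruct (C2_mu G HG a b ltac:(lra)) as [mu [Hmu Hmu']].
  destruct (C2_lip G HG a b ltac:(lra)) as [M [HM HM']].
  assert (Hum := smono_mono u (deriv_pos_inc u du Hd Hp)).
  assert (Hsign : (forall s, a < s < b -> G s < s) \/ (forall s, a < s < b -> s < G s)).
  { set (m := (a + b) / 2).
    assert (Hc2 : continuity (fun x => G x - x)).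
    { intro x. apply continuity_pt_minus. apply C2_cont; auto. apply derivable_continuous_pt, derivable_pt_id. }
    assert (Z : forall s t, a < s < b -> a < t < b -> s <= t -> (G s - s) * (G t - t) <= 0 -> False).
    { intros s t Hs' Ht Hst Hp0. destruct (IVT_cor _ s t Hc2 Hst Hp0) as [z [Hz Ez]].
      apply (Hfree z). lra. lra. }
    assert (Hm : a < m < b) by (unfold m; split; lra).
    assert (G m <> m) by (apply Hfree; auto).
    destruct (Rlt_le_dec (G m) m) as [l|l].
    - left. intros s Hs0. destruct (Rlt_le_dec (G s) s) as [l'|l']; auto. exfalso.
      destruct (Rle_dec m s). apply (Z m s Hm Hs0); auto. nra.
      apply (Z s m Hs0 Hm). lra. nra.
    - right. intros s Hs0. destruct (Rlt_le_dec s (G s)) as [l'|l']; auto. exfalso.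
      destruct (Rle_dec m s). apply (Z m s Hm Hs0); auto. nra.
      apply (Z s m Hs0 Hm). lra. nra. }
  destruct Hsign as [L|L].
  - apply (kopell_free_left G (Derive G) u du a b mu M t0); auto.
    apply C2_der; auto. apply C2_inc; auto.
  - apply (kopell_free_right G (Derive G) u du a b mu M t0); auto.
    apply C2_der; auto. apply C2_inc; auto.
Qed.

Theorem comp_commute f h : PG f -> PG h -> forall t, a < t < b -> f (h t) = h (f t).
Proof.
  intros Hf Hh t Ht. apply (holder PG a b); auto.
  - split. exists (fun _ => 1). split; [|split; [|split]].
    + intro x. apply derivable_pt_lim_id.
    + intro x. apply continuity_pt_const. intros p q; auto.
    + intros; lra.
    + intro y; exists y; auto.
    + split; auto.
  - intros u v [[du Hu] [Cu [Au Bu]]] [[dv Hv] [Cv [Av Bv]]]. split. eexists. apply C1h_comp; eauto.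
    split. intro x. rewrite Cv, Cu. auto. split. rewrite Av; auto. rewrite Bv; auto.
  - intros u [[du Hu] [Cu [Au Bu]]].
    destruct Hu as [Hd [Hc [Hp Hs]]].
    assert (Hi := deriv_pos_inc u du Hd Hp).
    assert (Hl : forall x, inv u (u x) = x) by (intro x; apply (smono_inj u Hi); apply inv_r; auto).
    split. eexists. apply C1h_inv. split; eauto.
    split. intro x. rewrite <- (inv_r u x (Hs x)) at 1. rewrite <- Cu. apply Hl.
    split. rewrite <- Au at 1. apply Hl. rewrite <- Bu at 1. apply Hl.
  - intros u [[du [Hd [Hc [Hp Hs]]]] _]. apply (deriv_pos_inc u du); auto.
  - intros u [[du [Hd [Hc [Hp Hs]]]] _]. auto.
  - intros u [[du [Hd [Hc [Hp Hs]]]] _] x. eapply dcont; eauto.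
  - intros u [_ [_ H]]. auto.
  - apply PG_free.
Qed.
End Comp.

Lemma closed_fix (G : R -> R) (s : nat -> R) q : continuity_pt G q -> (forall n, G (s n) = s n) ->
  (forall eps, 0 < eps -> exists n, Rabs (s n - q) < eps) -> G q = q.
Proof.
  intros Hc Hf Hs. apply NNPP. intro ne.
  set (e := Rabs (G q - q) / 2).
  assert (He : 0 < e) by (unfold e; assert (0 < Rabs (G q - q)) by (apply Rabs_pos_lt; lra); lra).
  destruct (cont_eps G q Hc e He) as [d [Hd Hd']].
  destruct (Hs (Rmin d e) ltac:(apply Rmin_pos; auto)) as [n Hn].
  assert (h1 : Rabs (s n - q) < d) by (eapply Rlt_le_trans; [apply Hn| apply Rmin_l]).
  assert (h2 : Rabs (s n - q) < e) by (eapply Rlt_le_trans; [apply Hn| apply Rmin_r]).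
  apply Hd' in h1. rewrite Hf in h1.
  assert (Rabs (G q - q) <= Rabs (s n - G q) + Rabs (s n - q)).
  { replace (G q - q) with (- (s n - G q) + (s n - q)) by ring.
    eapply Rle_trans. apply Rabs_triang. rewrite Rabs_Ropp. lra. }
  unfold e in *. lra.
Qed.

Lemma fix_inherit F G : C2L F -> C2L G -> (exists x1, F x1 = x1) ->
  (forall p q, p < q -> ~ (forall x, p < x < q -> G x = x)) ->
  (forall x, F (G x) = G (F x)) -> forall p, G p = p -> F p = p.
Proof.
  intros HF HG [x1 Hx1] Hns Hcomm p Hp. apply NNPP. intro ne.
  assert (Fc := C2_cont F HF). assert (Finc := C2_inc F HF). assert (Fm := smono_mono F Finc).
  assert (Gc := C2_cont G HG). assert (Gm := smono_mono G (C2_inc G HG)).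
  assert (Hc2 : continuity (fun x => F x - x)).
  { intro x. apply continuity_pt_minus. auto. apply derivable_continuous_pt, derivable_pt_id. }
  assert (Gorb : forall n, G (itr F n p) = itr F n p).
  { intro n. rewrite itr_comm1. rewrite Hp; auto. intro y; symmetry; auto. }
  destruct (Rtotal_order p (F p)) as [lt|[eq|gt]]; [| congruence |].
  - destruct (INR_unbounded (p - x1)) as [n Hn]. set (B := x1 + INR n).
    assert (HB : F B = B) by (unfold B; rewrite C2_per_nat; auto; rewrite Hx1; auto).
    assert (Orb : forall k, itr F k p <= B).
    { induction k. simpl. unfold B; lra. simpl. rewrite <- HB. apply Fm; auto. }
    destruct (orbit_inc F p B Fc Fm ltac:(lra) Orb) as [q [Q1 [Q2 [Q3 Q4]]]].
    assert (Hpq : p < q) by (assert (h := Q3 1%nat); simpl in h; lra).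
    assert (Gq : G q = q).
    { apply (closed_fix G (fun k => itr F k p) q (Gc q) Gorb).
      intros eps He. destruct (Q4 eps He) as [k Hk]. exists k. specialize (Q3 k). rewrite Rabs_left1; lra. }
    assert (Above : forall x, p <= x < q -> x < F x).
    { intros x Hx. destruct (Rlt_le_dec x (F x)) as [l|l]; auto. exfalso.
      destruct (IVT_cor _ p x Hc2 ltac:(lra)) as [r [Hr Er]].
      { assert (F x - x <= 0) by lra. assert (0 <= F p - p) by lra. nra. }
      assert (Fr : F r = r) by lra.
      assert (forall k, itr F k p <= r).
      { induction k. simpl; lra. simpl. rewrite <- Fr. apply Fm; auto. }
      destruct (Q4 (q - r)) as [k Hk]. lra. specialize (H k). lra. }
    destruct (C2_mu F HF p q ltac:(lra)) as [mu [Hmu Hmu']].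
    destruct (C2_lip F HF p q ltac:(lra)) as [M [HM HM']].
    assert (K := kopell_core_right F (Derive F) G (Derive G) q p mu M Hpq Hmu HM (C2_der F HF) Hmu' HM' Finc Q1 Above
      (C2_der G HG) (C2_dcont G HG q) Gm ltac:(intro y; symmetry; auto) Hp Gq).
    apply (Hns p (F p) lt). intros x Hx. apply K. lra.
  - destruct (INR_unbounded (x1 - p)) as [n Hn]. set (B := x1 - INR n).
    assert (HB : F B = B) by (unfold B; rewrite C2_per_nat'; auto; rewrite Hx1; auto).
    assert (Orb : forall k, B <= itr F k p).
    { induction k. simpl. unfold B; lra. simpl. rewrite <- HB. apply Fm; auto. }
    destruct (orbit_dec F p B Fc Fm ltac:(lra) Orb) as [q [Q1 [Q2 [Q3 Q4]]]].
    assert (Hpq : q < p) by (assert (h := Q3 1%nat); simpl in h; lra).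
    assert (Gq : G q = q).
    { apply (closed_fix G (fun k => itr F k p) q (Gc q) Gorb).
      intros eps He. destruct (Q4 eps He) as [k Hk]. exists k. specialize (Q3 k). rewrite Rabs_pos_eq; lra. }
    assert (Below : forall x, q < x <= p -> F x < x).
    { intros x Hx. destruct (Rlt_le_dec (F x) x) as [l|l]; auto. exfalso.
      destruct (IVT_cor _ x p Hc2 ltac:(lra)) as [r [Hr Er]].
      { assert (0 <= F x - x) by lra. assert (F p - p <= 0) by lra. nra. }
      assert (Fr : F r = r) by lra.
      assert (forall k, r <= itr F k p).
      { induction k. simpl; lra. simpl. rewrite <- Fr. apply Fm; auto. }
      destruct (Q4 (r - q)) as [k Hk]. lra. specialize (H k). lra. }
    destruct (C2_mu F HF q p ltac:(lra)) as [mu [Hmu Hmu']].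
    destruct (C2_lip F HF q p ltac:(lra)) as [M [HM HM']].
    assert (K := kopell_core F (Derive F) G (Derive G) q p mu M Hpq Hmu HM (C2_der F HF) Hmu' HM' Finc Q1 Below
      (C2_der G HG) (C2_dcont G HG q) Gm ltac:(intro y; symmetry; auto) Hp Gq).
    apply (Hns (F p) p gt). intros x Hx. apply K. lra.
Qed.

Lemma comp_left (G : R -> R) x : (forall y, continuity_pt G y) -> (exists f, f <= x /\ G f = f) -> G x <> x ->
  exists a, a < x /\ G a = a /\ forall t, a < t <= x -> G t <> t.
Proof.
  intros Gc [f [Hf Ef]] ne.
  set (E := fun y => G y = y /\ y <= x).
  assert (Hb : bound E) by (exists x; intros y [_ h]; auto).
  destruct (completeness E Hb (ex_intro _ f (conj Ef Hf))) as [a [A1 A2]].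
  assert (Hax : a <= x) by (apply A2; intros y [_ h]; auto).
  assert (Ga : G a = a).
  { apply NNPP. intro nea.
    set (e := Rabs (G a - a) / 2).
    assert (He : 0 < e) by (unfold e; assert (0 < Rabs (G a - a)) by (apply Rabs_pos_lt; lra); lra).
    destruct (cont_eps G a (Gc a) e He) as [d [Hd Hd']].
    set (m := Rmin d e). assert (Hm : 0 < m) by (apply Rmin_pos; auto).
    assert (exists y, E y /\ a - m < y).
    { apply NNPP. intro N. assert (a <= a - m). apply A2. intros y Hy.
      destruct (Rlt_le_dec (a - m) y); auto. exfalso; apply N; eauto. lra. }
    destruct H as [y [[Gy Hy] Hy']]. assert (y <= a) by (apply A1; split; auto).
    assert (h1 : Rabs (y - a) < d). { rewrite Rabs_left1 by lra. assert (m <= d) by apply Rmin_l. lra. }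
    assert (h2 : Rabs (y - a) < e). { rewrite Rabs_left1 by lra. assert (m <= e) by apply Rmin_r. lra. }
    apply Hd' in h1. rewrite Gy in h1.
    assert (Rabs (G a - a) <= Rabs (y - G a) + Rabs (y - a)).
    { replace (G a - a) with (- (y - G a) + (y - a)) by ring.
      eapply Rle_trans. apply Rabs_triang. rewrite Rabs_Ropp. lra. }
    unfold e in *. lra. }
  exists a. split. destruct Hax; auto. subst; congruence. split; auto.
  intros t Ht Gt. assert (t <= a) by (apply A1; split; lra). lra.
Qed.

Lemma comp_right (G : R -> R) x : (forall y, continuity_pt G y) -> (exists f, x <= f /\ G f = f) -> G x <> x ->
  exists b, x < b /\ G b = b /\ forall t, x <= t < b -> G t <> t.
Proof.
  intros Gc [f [Hf Ef]] ne.
  destruct (comp_left (refl G) (- x)) as [a [A1 [A2 A3]]].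
  - intro y. apply refl_cont; auto.
  - exists (- f). split. lra. unfold refl. rewrite Ropp_involutive, Ef. auto.
  - unfold refl. rewrite Ropp_involutive. lra.
  - exists (- a). unfold refl in A2. split. lra. split. lra.
    intros t Ht Gt. apply (A3 (- t)). lra. unfold refl. rewrite Ropp_involutive, Gt. auto.
Qed.

Lemma core_trans F G H : C2L F -> C2L G -> C2L H ->
  (exists x1, F x1 = x1) -> (exists x1, G x1 = x1) -> (exists x1, H x1 = x1) ->
  (forall p q, p < q -> ~ (forall x, p < x < q -> G x = x)) ->
  (forall x, F (G x) = G (F x)) -> (forall x, H (G x) = G (H x)) ->
  forall x, F (H x) = H (F x).
Proof.
  intros HF HG HH fF [g1 Hg1] fH Hns CF CH x.
  assert (IF := fix_inherit F G HF HG fF Hns CF).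
  assert (IH := fix_inherit H G HH HG fH Hns CH).
  destruct (Req_dec (G x) x) as [e|ne].
  - rewrite (IH x e), (IF x e), (IH x e). reflexivity.
  - assert (Gc := C2_cont G HG).
    assert (E1 : exists f, f <= x /\ G f = f).
    { destruct (INR_unbounded (g1 - x)) as [n Hn]. exists (g1 - INR n). split. lra.
      rewrite C2_per_nat'; auto. rewrite Hg1; auto. }
    assert (E2 : exists f, x <= f /\ G f = f).
    { destruct (INR_unbounded (x - g1)) as [n Hn]. exists (g1 + INR n). split. lra.
      rewrite C2_per_nat; auto. rewrite Hg1; auto. }
    destruct (comp_left G x Gc E1 ne) as [a [A1 [A2 A3]]].
    destruct (comp_right G x Gc E2 ne) as [b [B1 [B2 B3]]].
    assert (Hfree : forall s, a < s < b -> G s <> s).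
    { intros s Hs. destruct (Rle_dec s x). apply A3; lra. apply B3; lra. }
    assert (PC : forall K, C2L K -> (forall y, K (G y) = G (K y)) -> (forall p, G p = p -> K p = p) -> PG G a b K).
    { intros K HK CK IK. split. exists (Derive K). split; [|split; [|split]].
      - apply C2_der; auto.
      - apply C2_dcont; auto.
      - apply HK.
      - apply C2_surj; auto.
      - split; auto. }
    apply (comp_commute G a b HG ltac:(lra) A2 B2 Hfree); auto; lra.
Qed.


Lemma up_shift y n : up (y + IZR n) = (up y + n)%Z.
Proof.
  symmetry. apply tech_up; rewrite plus_IZR; destruct (archimed y); lra.
Qed.

Lemma frac_shift y n : frac_part (y + IZR n) = frac_part y.
Proof.
  unfold frac_part, Int_part. rewrite up_shift. rewrite !minus_IZR, plus_IZR. ring.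
Qed.

Lemma frac_int x y : frac_part x = frac_part y -> exists n, x = y + IZR n.
Proof.
  unfold frac_part. intro H. exists (Int_part x - Int_part y)%Z. rewrite minus_IZR. lra.
Qed.

Lemma frac_small x : 0 <= x < 1 -> frac_part x = x.
Proof.
  intro H. unfold frac_part, Int_part. assert (up x = 1%Z) by (symmetry; apply tech_up; simpl; lra).
  rewrite H0. simpl. ring.
Qed.

Lemma proj_val (p : S1) : proj (proj1_sig p) = p.
Proof.
  destruct p as [x Hx]. unfold proj. simpl.
  generalize (frac_part_in01 x). rewrite (frac_small x Hx). intro. f_equal. apply proof_irrelevance.
Qed.

Lemma proj_eq x y : frac_part x = frac_part y -> proj x = proj y.
Proof.
  intro H. unfold proj. generalize (frac_part_in01 x) (frac_part_in01 y). rewrite H. intros.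
  f_equal. apply proof_irrelevance.
Qed.

Lemma proj_frac x y : proj x = proj y -> frac_part x = frac_part y.
Proof. intro H. apply (f_equal (@proj1_sig _ _)) in H. exact H. Qed.

Lemma IZR_small n : -1 < IZR n < 1 -> n = 0%Z.
Proof. intros [h1 h2]. apply lt_IZR in h2. apply lt_IZR in h1. lia. Qed.

Lemma IZR_half n : IZR n <> 1/2.
Proof. intro H. assert (0 < IZR n < 1) by lra. destruct H0 as [h1 h2]. apply lt_IZR in h1. apply lt_IZR in h2. lia. Qed.

Lemma IZR_mhalf n : IZR n <> - (1/2).
Proof. intro H. assert (-1 < IZR n < 0) by lra. destruct H0 as [h1 h2]. apply lt_IZR in h1. apply lt_IZR in h2. lia. Qed.

Lemma C2_per_Z G x n : C2L G -> G (x + IZR n) = G x + IZR n.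
Proof.
  intro HG. destruct n as [|p|p].
  - simpl. rewrite !Rplus_0_r. auto.
  - assert (E : IZR (Z.pos p) = INR (Pos.to_nat p)) by (rewrite INR_IZR_INZ, positive_nat_Z; auto).
    rewrite E. apply C2_per_nat; auto.
  - assert (E : IZR (Z.neg p) = - INR (Pos.to_nat p)).
    { rewrite INR_IZR_INZ, positive_nat_Z. reflexivity. }
    rewrite E. replace (x + - INR (Pos.to_nat p)) with (x - INR (Pos.to_nat p)) by ring.
    rewrite C2_per_nat'; auto.
Qed.

Lemma C2_disp G x1 y : C2L G -> G x1 = x1 -> -1 < G y - y < 1.
Proof.
  intros HG Hx. set (k := Int_part (y - x1)).
  destruct (base_Int_part (y - x1)) as [h1 h2]. fold k in h1, h2.
  assert (E1 : G (x1 + IZR k) = x1 + IZR k) by (rewrite C2_per_Z, Hx; auto).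
  assert (E2 : G (x1 + IZR (k + 1)) = x1 + IZR (k + 1)) by (rewrite C2_per_Z, Hx; auto).
  rewrite plus_IZR in E2.
  assert (Gm := smono_mono G (C2_inc G HG)).
  assert (G (x1 + IZR k) <= G y) by (apply Gm; lra).
  assert (G y < G (x1 + (IZR k + 1))) by (apply C2_inc; auto; lra).
  split; lra.
Qed.

Lemma lift_ok f : Diff2plus f -> has_fixed_point f ->
  exists F, is_lift f F /\ C2L F /\ exists x1, F x1 = x1.
Proof.
  intros [F [HL [Hp [Hd [Hd2 [Hc Hpos]]]]]] [p Hfp].
  set (x0 := proj1_sig p).
  assert (E : proj (F x0) = proj x0) by (rewrite HL; unfold x0; rewrite proj_val; auto).
  destruct (frac_int _ _ (proj_frac _ _ E)) as [m Hm].
  set (F' := fun x => F x - IZR m).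
  assert (DE : forall x, Derive F' x = Derive F x).
  { intro x. unfold F'. rewrite Derive_minus; auto. rewrite Derive_const. ring. apply ex_derive_const. }
  assert (DF : Derive F' = Derive F) by (apply functional_extensionality; auto).
  exists F'. split; [|split].
  - intro x. rewrite <- HL. unfold F'. apply proj_eq.
    replace (F x - IZR m) with (F x + IZR (- m)) by (rewrite opp_IZR; ring). apply frac_shift.
  - split; [|split; [|split; [|split]]].
    + intro x. unfold F'. rewrite Hp. ring.
    + intro x. unfold F'. apply (ex_derive_minus F (fun _ => IZR m)); auto. apply ex_derive_const.
    + intro x. rewrite DF. apply Hd2.
    + intro x. rewrite DF. apply Hc.
    + intro x. rewrite DE. auto.
  - exists x0. unfold F'. lra.
Qed.

Lemma lift_comm f g F G : is_lift f F -> is_lift g G -> C2L F -> C2L G -> (exists x1, F x1 = x1) ->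
  commute_maps f g -> forall x, F (G x) = G (F x).
Proof.
  intros LF LG HF HG [x1 Hx1] Hc.
  set (D := fun x => F (G x) - G (F x)).
  assert (DI : forall x, exists n, D x = IZR n).
  { intro x. assert (proj (F (G x)) = proj (G (F x))).
    { rewrite LF, LG, Hc, <- LF, LG. auto. }
    destruct (frac_int _ _ (proj_frac _ _ H)) as [n Hn]. exists n. unfold D. lra. }
  assert (Dc : continuity D).
  { intro x. unfold D. apply continuity_pt_minus.
    - apply (continuity_pt_comp G F). apply C2_cont; auto. apply C2_cont; auto.
    - apply (continuity_pt_comp F G). apply C2_cont; auto. apply C2_cont; auto. }
  assert (D0 : D x1 = 0).
  { destruct (DI x1) as [n Hn]. unfold D in Hn. rewrite Hx1 in Hn.
    assert (h := C2_disp F x1 (G x1) HF Hx1). rewrite (IZR_small n) in Hn. unfold D; rewrite Hx1. lra.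
    lra. }
  intro x. destruct (DI x) as [n Hn].
  assert (n = 0%Z).
  { apply NNPP. intro ne.
    assert (Hs : 1 <= IZR n \/ IZR n <= -1).
    { destruct (Z_lt_le_dec n 0). right. apply IZR_le. lia. left. apply IZR_le. lia. }
    destruct Hs as [Hs|Hs].
    - set (D' := fun y => D y - 1/2).
      assert (Dc' : continuity D') by (intro y; apply continuity_pt_minus; auto; apply continuity_pt_const; intros p q; auto).
      assert (Z : forall a b, a <= b -> D' a * D' b <= 0 -> False).
      { intros a b Hab Hp. destruct (IVT_cor D' a b Dc' Hab Hp) as [z [_ Ez]].
        destruct (DI z) as [m Hm]. unfold D' in Ez. apply (IZR_half m). lra. }
      destruct (Rle_dec x1 x). apply (Z x1 x); auto. unfold D'. rewrite D0, Hn. nra.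
      apply (Z x x1). lra. unfold D'. rewrite D0, Hn. nra.
    - set (D' := fun y => D y + 1/2).
      assert (Dc' : continuity D') by (intro y; apply continuity_pt_plus; auto; apply continuity_pt_const; intros p q; auto).
      assert (Z : forall a b, a <= b -> D' a * D' b <= 0 -> False).
      { intros a b Hab Hp. destruct (IVT_cor D' a b Dc' Hab Hp) as [z [_ Ez]].
        destruct (DI z) as [m Hm]. unfold D' in Ez. apply (IZR_mhalf m). lra. }
      destruct (Rle_dec x1 x). apply (Z x1 x); auto. unfold D'. rewrite D0, Hn. nra.
      apply (Z x x1). lra. unfold D'. rewrite D0, Hn. nra. }
  subst n. unfold D in Hn. simpl in Hn. lra.
Qed.

Lemma lift_ns f F : is_lift f F -> fully_supported f -> forall p q, p < q -> ~ (forall x, p < x < q -> F x = x).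
Proof.
  intros L Hf p q Hpq H. apply Hf. exists p, q. split; auto. intros x Hx. rewrite <- L, H; auto.
Qed.

Lemma circle_comm f h F H : is_lift f F -> is_lift h H -> (forall x, F (H x) = H (F x)) -> commute_maps f h.
Proof.
  intros LF LH E p. rewrite <- (proj_val p). rewrite <- LH, <- LF, <- LF, <- LH, E. auto.
Qed.

Lemma circle_trans f g h : Diff2plus f -> Diff2plus g -> Diff2plus h ->
  has_fixed_point f -> has_fixed_point g -> has_fixed_point h -> fully_supported g ->
  commute_maps f g -> commute_maps g h -> commute_maps f h.
Proof.
  intros Df Dg Dh Ff Fg Fh Sg Cfg Cgh.
  destruct (lift_ok f Df Ff) as [F [LF [HF fF]]].
  destruct (lift_ok g Dg Fg) as [G [LG [HG fG]]].
  destruct (lift_ok h Dh Fh) as [H [LH [HH fH]]].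
  apply (circle_comm f h F H LF LH).
  apply (core_trans F G H HF HG HH fF fG fH (lift_ns g G LG Sg)).
  - apply (lift_comm f g F G); auto.
  - intro x. symmetry. apply (lift_comm g h G H); auto.
Qed.

Lemma commute_sym f g : commute_maps f g -> commute_maps g f.
Proof. intros H p. symmetry. apply H. Qed.

Lemma grp_comm k g x : (forall i, (i < k)%nat -> commute_maps (g i) x) ->
  forall h, in_gen_group k g h -> commute_maps h x.
Proof.
  intros Hg h Hh. induction Hh as [| i Hi | h1 h2 _ IH1 _ IH2 | h0 h' _ IH Hl Hr].
  - intro p. reflexivity.
  - apply Hg; auto.
  - intro p. rewrite IH2, IH1. reflexivity.
  - intro p. rewrite <- (Hl (x (h' p))). rewrite IH, Hr. reflexivity.
Qed.

Theorem corollary3p6 (k : nat) (g : nat -> S1 -> S1) :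
  (forall i, (i < k)%nat -> Diff2plus (g i)) ->
  (forall i, (i < k)%nat -> fully_supported (g i)) ->
  (forall i, (i < k)%nat -> has_fixed_point (g i)) ->
  comm_graph_connected k g ->
  gen_group_abelian k g.
Proof.
  intros HD HS HF Hconn.
  assert (Pair : forall i j, (i < k)%nat -> (j < k)%nat -> commute_maps (g i) (g j)).
  { intros i j Hi Hj. specialize (Hconn i j Hi Hj).
    assert (forall x y, clos_refl_trans nat (comm_edge k g) x y -> (x < k)%nat ->
      (y < k)%nat /\ commute_maps (g x) (g y)).
    { intros x y Hxy. induction Hxy as [x y [h1 [h2 h3]] | x | x y z _ IH1 _ IH2]; intro hx.
      - auto.
      - split; auto. intro p; reflexivity.
      - destruct (IH1 hx) as [hy C1]. destruct (IH2 hy) as [hz C2]. split; auto.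
        apply (circle_trans (g x) (g y) (g z)); auto. }
    apply H; auto. }
  intros h1 h2 H1 H2.
  apply (grp_comm k g h2); auto.
  intros i Hi. apply commute_sym. apply (grp_comm k g (g i)); auto.
Qed.
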